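(* Fix $k\in\mathbb{Z}_{\geq 1}$ and $m\geq k$. The map $W_k$, from $\mathrm{Av}_m(312)$ to the set of walks of size $m-k+1$ in the overlap graph $\mathcal{O}v(k,\mathrm{Av}(312))$, is surjective.
   Context: For $n\ge1$, $\mathcal S_n$ is the set of permutations of $[n]$; by convention $\mathrm{Av}_0(B)$ consists of the empty permutation. For $I=\{i_1<\dots<i_m\}$, $\mathrm{pat}_I(\sigma)$ is the unique permutation whose entries are in the same relative order as $\sigma(i_1),\dots,\sigma(i_m)$. $\sigma$ avoids $\pi$ if no $I$ has $\mathrm{pat}_I(\sigma)=\pi$; $\mathrm{Av}_n(B)$ is the set of size-$n$ permutations avoiding all elements of $B$. Overlap graph: $\mathcal{O}v(k,\mathrm{Av}(B))$ is the directed multigraph with vertex set $\mathrm{Av}_{k-1}(B)$ and, for each $\pi\in\mathrm{Av}_k(B)$, one edge labelled $\pi$ from $\mathrm{pat}_{\{1,\dots,k-1\}}(\pi)$ to $\mathrm{pat}_{\{2,\dots,k\}}(\pi)$. A walk of size $s$ is a sequence of $s$ edges $(e_1,\dots,e_s)$ with the arrival vertex of $e_i$ equal to the start vertex of $e_{i+1}$. For $\sigma\in\mathrm{Av}_m(B)$ with $m\ge k$, $W_k(\sigma)=(e_1,\dots,e_{m-k+1})$ where $e_i$ is the edge labelled $\mathrm{pat}_{\{i,i+1,\dots,i+k-1\}}(\sigma)$; this is a walk in $\mathcal{O}v(k,\mathrm{Av}(B))$. *)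

(* Defs.v *)
From mathcomp Require Import all_boot.
Set Implicit Arguments. Unset Strict Implicit. Unset Printing Implicit Defensive.

(* Permutations of [n] are represented (0-based) as sequences of nat that are
   rearrangements of [:: 0; 1; ...; n-1]; sigma(i+1) is the i-th entry. *)
Definition is_perm (n : nat) (s : seq nat) : Prop := perm_eq s (iota 0 n).

(* Standardisation: replace each entry by its rank (0-based) among the entries.
   For a sequence of distinct naturals this is the unique permutation whose
   entries are in the same relative order. *)
Definition std (s : seq nat) : seq nat :=
  [seq count (fun y => y < x) s | x <- s].

Definition pat (I : bitseq) (s : seq nat) : seq nat := std (mask I s).

Definition contains (s pi : seq nat) : Prop :=
  exists I : bitseq, size I = size s /\ pat I s = pi.

Definition avoids (s pi : seq nat) : Prop := ~ contains s pi.

Definition Av (B : seq (seq nat)) (n : nat) (s : seq nat) : Prop :=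
  is_perm n s /\ forall pi, pi \in B -> avoids s pi.

Definition p312 : seq nat := [:: 2; 0; 1].

(* Overlap graph Ov(k, Av(B)): vertices Av_{k-1}(B); one edge per pi in Av_k(B),
   labelled pi, from pat_{1..k-1}(pi) to pat_{2..k}(pi).  Edges are identified
   with their labels. *)
Definition ov_edge (B : seq (seq nat)) (k : nat) (pi : seq nat) : Prop := Av B k pi.
Definition ov_src (k : nat) (pi : seq nat) : seq nat := std (take k.-1 pi).
Definition ov_tgt (k : nat) (pi : seq nat) : seq nat := std (drop 1 pi).

Definition is_walk (B : seq (seq nat)) (k s : nat) (w : seq (seq nat)) : Prop :=
  size w = s /\
  (forall i, i < s -> ov_edge B k (nth [::] w i)) /\
  (forall i, i.+1 < s -> ov_tgt k (nth [::] w i) = ov_src k (nth [::] w i.+1)).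

Definition Wk (k : nat) (sigma : seq nat) : seq (seq nat) :=
  [seq std (take k (drop i sigma)) | i <- iota 0 (size sigma - k + 1)].

(* Main.v *)
Require Import Defs.
From mathcomp Require Import all_boot.
From mathcomp Require Import zify.
Set Implicit Arguments. Unset Strict Implicit.

Lemma size_std s : size (std s) = size s.
Proof. by rewrite size_map. Qed.

Lemma nth_std s i : i < size s -> nth 0 (std s) i = count (fun y => y < nth 0 s i) s.
Proof. by move=> hi; rewrite (nth_map 0). Qed.

Lemma count_lt_mem x y s : x < y -> x \in s ->
  count (fun z => z < x) s < count (fun z => z < y) s.
Proof.
elim: s => //= z s IH hxy; rewrite inE => /orP [/eqP <-|hx].
  rewrite ltnn hxy add0n add1n ltnS; apply: sub_count => t /= ht.
  exact: ltn_trans ht hxy.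
have := IH hxy hx.
case hzx: (z < x); first by rewrite (ltn_trans hzx hxy) /=; lia.
case: (z < y) => /=; lia.
Qed.

Lemma std_lt s i j : i < size s -> j < size s ->
  (nth 0 (std s) i < nth 0 (std s) j) = (nth 0 s i < nth 0 s j).
Proof.
move=> hi hj; rewrite !nth_std //.
case: (ltnP (nth 0 s i) (nth 0 s j)) => h.
  by apply: count_lt_mem h _; apply: mem_nth.
apply/negbTE; rewrite -leqNgt; apply: sub_count => z /= hz.
exact: leq_trans hz h.
Qed.

Lemma count_nth (p : pred nat) s :
  count p s = count (fun i => p (nth 0 s i)) (iota 0 (size s)).
Proof. by rewrite -{1}(mkseq_nth 0 s) /mkseq count_map. Qed.

Lemma std_rel s t : size s = size t ->
  (forall i j, i < size s -> j < size s ->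
     (nth 0 s i < nth 0 s j) = (nth 0 t i < nth 0 t j)) -> std s = std t.
Proof.
move=> hs hr; apply: (@eq_from_nth _ 0); first by rewrite !size_std.
move=> i; rewrite size_std => hi.
rewrite !nth_std -?hs // (count_nth _ s) (count_nth _ t) -hs.
apply: eq_in_count => j; rewrite mem_iota add0n => /andP[_ hj] /=.
exact: hr.
Qed.

Lemma count_iota_lt x n : count (fun y => y < x) (iota 0 n) = minn x n.
Proof.
elim: n => [|n IH]; first by rewrite /= minn0.
rewrite -addn1 iotaD count_cat IH /= add0n.
case: (ltnP n x) => h /=; lia.
Qed.

Lemma is_permP n s : is_perm n s <-> [/\ uniq s, size s = n & all (fun x => x < n) s].
Proof.
split.
  move=> h; split.
  - by rewrite (perm_uniq h) iota_uniq.
  - by rewrite (perm_size h) size_iota.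
  - by apply/allP => x; rewrite (perm_mem h) mem_iota.
move=> [hu hs ha]; apply: uniq_perm => //; first exact: iota_uniq.
have hsub : {subset s <= iota 0 n}.
  by move=> x hx; rewrite mem_iota /=; move/allP: ha => /(_ x hx).
have hsz : size (iota 0 n) <= size s by rewrite size_iota hs.
by have [_ h] := uniq_min_size hu hsub hsz.
Qed.

Lemma std_perm n s : is_perm n s -> std s = s.
Proof.
move=> h; have [hu hs ha] := (is_permP n s).1 h.
apply: (@eq_from_nth _ 0); first by rewrite size_std.
move=> i; rewrite size_std => hi; rewrite nth_std //.
have /permP -> := h.
rewrite count_iota_lt.
have : nth 0 s i < n by move/allP: ha; apply; apply: mem_nth.
lia.
Qed.

Definition has312 (s : seq nat) := exists i j l, i < j /\ j < l /\ l < size s /\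
  nth 0 s j < nth 0 s l /\ nth 0 s l < nth 0 s i.

Lemma std3 a b c : (std [:: a; b; c] == [:: 2; 0; 1]) = (b < c < a).
Proof.
rewrite /std /=.
case: (ltngtP a b) => h1; case: (ltngtP b c) => h2; case: (ltngtP a c) => h3 //=;
  rewrite ?ltnn /=; try lia; try reflexivity.
Qed.

Lemma L1 s I a : mask I s = [:: a] -> exists i, i < size s /\ nth 0 s i = a.
Proof.
elim: s I => [|x s IH] [|[] I] //=.
  by case=> -> _; exists 0.
by move=> /IH [i [h1 h2]]; exists i.+1.
Qed.

Lemma L2 s I a b : mask I s = [:: a; b] ->
  exists i j, i < j /\ j < size s /\ nth 0 s i = a /\ nth 0 s j = b.
Proof.
elim: s I => [|x s IH] [|[] I] //=.
  by case=> -> /L1 [j [h1 h2]]; exists 0, j.+1.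
by move=> /IH [i [j [h1 [h2 [h3 h4]]]]]; exists i.+1, j.+1.
Qed.

Lemma L3 s I a b c : mask I s = [:: a; b; c] ->
  exists i j l, i < j /\ j < l /\ l < size s /\ nth 0 s i = a /\ nth 0 s j = b /\ nth 0 s l = c.
Proof.
elim: s I => [|x s IH] [|[] I] //=.
  by case=> -> /L2 [j [l [h1 [h2 [h3 h4]]]]]; exists 0, j.+1, l.+1.
by move=> /IH [i [j [l [h1 [h2 [h3 [h4 [h5 h6]]]]]]]]; exists i.+1, j.+1, l.+1.
Qed.

Lemma C1 s i : i < size s -> exists I, size I = size s /\ mask I s = [:: nth 0 s i].
Proof.
elim: s i => [|x s IH] [|i] //= hi.
  by exists (true :: nseq (size s) false); rewrite /= size_nseq mask_false.
have [I [h1 h2]] := IH i hi; by exists (false :: I); rewrite /= h1 h2.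
Qed.

Lemma C2 s i j : i < j -> j < size s ->
  exists I, size I = size s /\ mask I s = [:: nth 0 s i; nth 0 s j].
Proof.
elim: s i j => [|x s IH] [|i] [|j] //= hij hj.
  have [I [h1 h2]] := C1 hj; by exists (true :: I); rewrite /= h1 h2.
have [I [h1 h2]] := IH i j hij hj; by exists (false :: I); rewrite /= h1 h2.
Qed.

Lemma C3 s i j l : i < j -> j < l -> l < size s ->
  exists I, size I = size s /\ mask I s = [:: nth 0 s i; nth 0 s j; nth 0 s l].
Proof.
elim: s i j l => [|x s IH] [|i] [|j] [|l] //= hij hjl hl.
  have [I [h1 h2]] := C2 (hjl : j < l) (hl : l < size s); by exists (true :: I); rewrite /= h1 h2.
have [I [h1 h2]] := IH i j l hij hjl hl; by exists (false :: I); rewrite /= h1 h2.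
Qed.

Lemma contains312 s : contains s p312 <-> has312 s.
Proof.
split.
  move=> [I [hI hp]]; rewrite /pat /p312 in hp.
  have hsz : size (mask I s) = 3 by rewrite -(size_std (mask I s)) hp.
  move: hp hsz; case hm: (mask I s) => [|a [|b [|c [|d r]]]] //= hp _.
  have /andP [h1 h2] : b < c < a by rewrite -std3; apply/eqP.
  have [i [j [l [? [? [? [ha [hb hc]]]]]]]] := L3 hm.
  exists i, j, l; rewrite ha hb hc; lia.
move=> [i [j [l [hij [hjl [hl [h1 h2]]]]]]].
have [I [hI hm]] := C3 hij hjl hl.
exists I; split => //; rewrite /pat hm; apply/eqP; rewrite std3 h1 h2.
done.
Qed.

Definition fsh (v z : nat) := if z < v then z else z.+1.

Lemma fsh_lt v a b : (fsh v a < fsh v b) = (a < b).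
Proof. rewrite /fsh; case: (ltnP a v) => ha; case: (ltnP b v) => hb; apply/idP/idP; lia. Qed.

Lemma fsh_ltv v z : (fsh v z < v) = (z < v).
Proof. rewrite /fsh; case: (ltnP z v) => ha; apply/idP/idP; lia. Qed.

Lemma v_ltfsh v z : (v < fsh v z) = (v <= z).
Proof. rewrite /fsh; case: (ltnP z v) => ha; apply/idP/idP; lia. Qed.

Lemma fsh_neq v z : fsh v z != v.
Proof. rewrite /fsh; case: (ltnP z v) => ha; apply/eqP; lia. Qed.

Lemma fsh_inj v : injective (fsh v).
Proof. move=> a b; rewrite /fsh; case: (ltnP a v) => ha; case: (ltnP b v) => hb; lia. Qed.

Lemma std_map_fsh v s : std (map (fsh v) s) = std s.
Proof.
apply: std_rel; rewrite size_map // => i j hi hj.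
by rewrite !(nth_map 0) // fsh_lt.
Qed.

Lemma fm_le n l x : x \in l -> foldr minn n l <= x.
Proof.
elim: l => //= y l IH; rewrite inE => /orP [/eqP ->|h]; first exact: geq_minl.
exact: leq_trans (geq_minr _ _) (IH h).
Qed.

Lemma fm_cases n l : foldr minn n l = n \/ foldr minn n l \in l.
Proof.
elim: l => [|y l IH]; first by left.
change (minn y (foldr minn n l) = n \/ minn y (foldr minn n l) \in y :: l).
case: (leqP y (foldr minn n l)) => h.
  by right; rewrite inE eqxx.
case: IH => [->|h2]; [by left | by right; rewrite inE h2 orbT].
Qed.

Lemma fm_gt n l z : z < n -> all (fun y => z < y) l -> z < foldr minn n l.
Proof.
elim: l => //= y l IH hz /andP [h1 h2]; rewrite leq_min h1; exact: IH.
Qed.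

Lemma Av312 n s : Av [:: p312] n s <-> is_perm n s /\ ~ has312 s.
Proof.
split.
  by move=> [hp ha]; split => // h; apply: (ha p312); [rewrite inE | apply/contains312].
move=> [hp hn]; split => // pi; rewrite inE => /eqP -> /contains312; exact: hn.
Qed.

Lemma dropl_cat (T : Type) n (s1 s2 : seq T) : n <= size s1 ->
  drop n (s1 ++ s2) = drop n s1 ++ s2.
Proof.
move=> h; rewrite drop_cat; case: ltnP => h2 //.
have -> : n = size s1 by lia.
by rewrite subnn drop0 drop_size.
Qed.

Lemma step (k s : nat) (sg e : seq nat) :
  Av [:: p312] (s + k) sg -> Av [:: p312] k.+1 e ->
  (forall i j, i < k -> j < k ->
     (nth 0 sg (s + i) < nth 0 sg (s + j)) = (nth 0 e i < nth 0 e j)) ->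
  exists sg2, Av [:: p312] (s + k).+1 sg2 /\
    (forall i, i < s -> std (take k.+1 (drop i sg2)) = std (take k.+1 (drop i sg))) /\
    std (take k.+1 (drop s sg2)) = e.
Proof.
move=> /Av312 [/is_permP [hu hs ha] hn] /Av312 [/is_permP [hue hse hae] hne] hrel.
set n := s + k.
set q := nth 0 e k.
set L := map (fun i => nth 0 sg (s + i)) (filter (fun i => q < nth 0 e i) (iota 0 k)).
set v := foldr minn n L.
have hsgn : forall t, t < n -> nth 0 sg t < n.
  by move=> t ht; move/allP: ha; apply; apply: mem_nth; rewrite hs.
have Hv_le : forall i, i < k -> q < nth 0 e i -> v <= nth 0 sg (s + i).
  move=> i hi hq; apply: fm_le; apply: map_f; rewrite mem_filter hq mem_iota /=; lia.
have Hv_cases : v = n \/ exists p, p < k /\ q < nth 0 e p /\ v = nth 0 sg (s + p).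
  case: (fm_cases n L) => h; first by left.
  right; move: h => /mapP [p]; rewrite mem_filter mem_iota => /andP [hq hp] hv.
  exists p; rewrite /v hv; split => //; lia.
have Hlt_v : forall i, i < k -> nth 0 e i < q -> nth 0 sg (s + i) < v.
  move=> i hi hq; apply: fm_gt; first by apply: hsgn; lia.
  apply/allP => y /mapP [j]; rewrite mem_filter mem_iota => /andP [hqj hj] ->.
  rewrite hrel //; first exact: ltn_trans hq hqj.
have He_neq : forall i, i < k -> nth 0 e i != q.
  move=> i hi; rewrite /q nth_uniq ?hse //; lia.
have HWv : forall i, i < k -> (nth 0 sg (s + i) < v) = (nth 0 e i < q).
  move=> i hi; case: (ltngtP (nth 0 e i) q) => h.
  - exact: Hlt_v.
  - by apply/negbTE; rewrite -leqNgt; apply: Hv_le.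
  - by move: (He_neq i hi); rewrite h eqxx.
have hvn : v <= n.
  case: Hv_cases => [->|[p [hp [_ ->]]]] //; apply: ltnW; apply: hsgn; lia.
set sg2 := rcons (map (fsh v) sg) v.
have nth2 : forall t, t < n -> nth 0 sg2 t = fsh v (nth 0 sg t).
  by move=> t ht; rewrite /sg2 nth_rcons size_map hs ht (nth_map 0) // hs.
have nth2n : nth 0 sg2 n = v.
  by rewrite /sg2 nth_rcons size_map hs ltnn eqxx.
have hs2 : size sg2 = n.+1 by rewrite /sg2 size_rcons size_map hs.
exists sg2; split; last split.
- apply/Av312; split.
    apply/is_permP; split => //.
      rewrite /sg2 rcons_uniq (map_inj_uniq (@fsh_inj v)) hu andbT.
      by apply/mapP => [[z _ hz]]; move: (fsh_neq v z); rewrite -hz eqxx.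
    rewrite /sg2 all_rcons ltnS hvn /= all_map; apply/allP => z hz /=.
    have : z < n by move/allP: ha; apply.
    rewrite /fsh /n; case: (ltnP z v) => _; lia.
  move=> [i [j [l [hij [hjl [hl [h1 h2]]]]]]].
  rewrite hs2 in hl.
  case: (ltngtP l n) => hln; last first.
  + rewrite hln nth2n in h1 h2.
    rewrite nth2 in h1; last lia.
    rewrite nth2 in h2; last lia.
    rewrite fsh_ltv in h1; rewrite v_ltfsh in h2.
    case: Hv_cases => [hv|[p [hp [hqp hv]]]].
      have : nth 0 sg i < n by apply: hsgn; lia.
      lia.
    case: (ltngtP j (s + p)) => hjp.
    * apply: hn; exists i, j, (s + p); rewrite -hv; do 3 (split; first lia); split => //.
      rewrite ltn_neqAle h2 andbT hv nth_uniq ?hs //; lia.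
    * apply: hne; exists p, (j - s), k.
      do 3 (split; first lia).
      rewrite -/q; split; last by [].
      rewrite -HWv; last lia.
      by have -> : s + (j - s) = j by lia.
    * by rewrite hjp -hv ltnn in h1.
  + lia.
  + apply: hn; exists i, j, l; rewrite hs.
    rewrite !nth2 in h1 h2; try lia.
    rewrite !fsh_lt in h1 h2; lia.
- move=> i hi; rewrite /sg2 -cats1 dropl_cat; last by rewrite size_map hs; lia.
  rewrite takel_cat; last by rewrite size_drop size_map hs; lia.
  by rewrite -map_drop -map_take std_map_fsh.
- rewrite /sg2 -cats1 dropl_cat; last by rewrite size_map hs; lia.
  rewrite take_oversize; last by rewrite size_cat size_drop size_map hs /=; lia.
  rewrite cats1 -map_drop -(std_perm (n := k.+1) (s := e)); last by apply/is_permP.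
  apply: std_rel; first by rewrite size_rcons size_map size_drop hs hse; lia.
  rewrite size_rcons size_map size_drop hs => i j hi hj.
  have hk : n - s = k by lia.
  rewrite !nth_rcons size_map size_drop hs hk.
  case: (ltngtP i k) => hik; try lia; case: (ltngtP j k) => hjk; try lia.
  + by rewrite !(nth_map 0) ?size_drop ?hs ?hk // fsh_lt !nth_drop hrel.
  + by rewrite hjk (nth_map 0) ?size_drop ?hs ?hk // fsh_ltv nth_drop HWv.
  + rewrite hik (nth_map 0) ?size_drop ?hs ?hk // v_ltfsh nth_drop leqNgt HWv //.
    rewrite -/q.
    by case: (ltngtP (nth 0 e j) q) => //= h; move: (He_neq j hjk); rewrite h eqxx.
  + by rewrite hik hjk !ltnn.
Qed.

Lemma nth_Wk k sg i : i < size sg - k + 1 ->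
  nth [::] (Wk k sg) i = std (take k (drop i sg)).
Proof. by move=> h; rewrite /Wk (nth_map 0) ?size_iota // nth_iota. Qed.

Lemma size_Wk k sg : size (Wk k sg) = size sg - k + 1.
Proof. by rewrite /Wk size_map size_iota. Qed.

Lemma main_ind k : forall s w, 0 < s -> is_walk [:: p312] k.+1 s w ->
  exists sg, Av [:: p312] (s + k) sg /\ Wk k.+1 sg = w.
Proof.
elim => [|s IH] // w _ [hw [hedge hadj]].
case: (posnP s) => [s0|spos].
  subst s; exists (nth [::] w 0); have he := hedge 0 isT.
  have [hp _] := he; have [_ hse _] := (is_permP _ _).1 hp.
  split; first by rewrite add1n.
  apply: (@eq_from_nth _ [::]); first by rewrite size_Wk hw hse subnn.
  rewrite size_Wk hse subnn => i; rewrite ltnS leqn0 => /eqP ->.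
  rewrite nth_Wk ?hse ?subnn // drop0 take_oversize ?hse //.
  exact: std_perm hp.
set w' := take s w.
have hw' : is_walk [:: p312] k.+1 s w'.
  split; first by rewrite size_take hw ltnSn.
  split.
    by move=> i hi; rewrite /w' nth_take //; apply: hedge; lia.
  by move=> i hi; rewrite /w' !nth_take //; [apply: hadj; lia | lia].
have [sg [hAv hWk]] := IH w' spos hw'.
set e := nth [::] w s.
have hAe : Av [:: p312] k.+1 e by apply: hedge.
have [hp _] := hAv; have [hu hs ha] := (is_permP _ _).1 hp.
have [hpe _] := hAe; have [hue hse hae] := (is_permP _ _).1 hpe.
set t := take k.+1 (drop s.-1 sg).
have hst : size t = k.+1 by rewrite size_take size_drop hs; case: ltnP; lia.
have hadj1 : std (drop 1 (std t)) = std (take k e).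
  have := hadj s.-1; rewrite prednK // => /(_ (ltnSn s)).
  rewrite /ov_tgt /ov_src /= -/e.
  have -> : nth [::] w s.-1 = nth [::] w' s.-1 by rewrite /w' nth_take //; lia.
  by rewrite -hWk nth_Wk // hs; lia.
have ht : forall i, i < k -> nth 0 sg (s + i) = nth 0 t i.+1.
  move=> i hi; rewrite nth_take // nth_drop; congr nth; lia.
have e1 : forall x, nth 0 (std t) x.+1 = nth 0 (drop 1 (std t)) x.
  by move=> x; rewrite nth_drop add1n.
have hrel : forall i j, i < k -> j < k ->
     (nth 0 sg (s + i) < nth 0 sg (s + j)) = (nth 0 e i < nth 0 e j).
  move=> i j hi hj.
  rewrite !ht // -(std_lt (s := t)) ?hst // !e1.
  rewrite -(std_lt (s := drop 1 (std t))) ?size_drop ?size_std ?hst ?subSS ?subn0 //.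
  rewrite hadj1 std_lt ?size_take ?hse ?ltnSn //.
  by rewrite !nth_take.
have [sg2 [hAv2 [hwin hlast]]] := step hAv hAe hrel.
exists sg2; split; first by rewrite addSn.
have [hp2 _] := hAv2; have [_ hs2 _] := (is_permP _ _).1 hp2.
apply: (@eq_from_nth _ [::]); first by rewrite size_Wk hw hs2; lia.
rewrite size_Wk hs2 => i hi.
rewrite nth_Wk ?hs2 //.
case: (ltngtP i s) => his.
- rewrite hwin // -nth_Wk; last by rewrite hs; lia.
  by rewrite hWk /w' nth_take.
- lia.
- by rewrite his hlast.
Qed.

Theorem mainTheorem4 (k m : nat) :
  1 <= k -> k <= m ->
  forall w : seq (seq nat), is_walk [:: p312] k (m - k + 1) w ->
  exists sigma : seq nat, Av [:: p312] m sigma /\ Wk k sigma = w.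
Proof.
case: k => [|k] // _ hkm w hw.
have hpos : 0 < m - k.+1 + 1 by rewrite addn1.
have [sg [hA hW]] := main_ind hpos hw.
exists sg; split => //.
have e : m - k.+1 + 1 + k = m by lia.
by rewrite e in hA.
Qed.
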